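(* Fix $0<b_1<b_2<1$ and an integer $N\ge1$. Let $\{\chi_t(x)\}$ and $\{j_t(x)\}$, $(x,t)\in\mathbb Z\times\{1,\dots,N\}$, be mutually independent, with $P[\chi_t(x)=1]=b_1=1-P[\chi_t(x)=0]$ and $P[j_t(x)=r]=(1-b_2)b_2^{r-1}$ for $r\ge1$. Call an integer $k$ separating if, for each $t\in[1,N]$, $\chi_t(k+t)=0$ and $\max_{m<k+t}(j_t(m)+m)\le k+t$. Then almost surely there exists a doubly infinite sequence of integers $\cdots<R_{-1}<R_0<R_1<\cdots$ such that every $R_i$ is separating. *)

(* Defs.v *)
From HB Require Import structures.
From mathcomp Require Import all_boot all_order all_algebra.
From mathcomp Require Import all_classical all_reals all_analysis.
Set Implicit Arguments. Unset Strict Implicit. Unset Printing Implicit Defensive.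
Import Order.TTheory GRing.Theory Num.Theory.
Local Open Scope classical_set_scope.
Local Open Scope ring_scope.

Definition mutually_independent d (T : measurableType d) (R : realType)
  (P : probability T R) (I : choiceType) (J : set I) (X : I -> T -> nat) :=
  (forall i, J i -> forall A : set nat, measurable (X i @^-1` A)) /\
  (forall (s : seq I) (A : I -> set nat), uniq s -> (forall i, i \in s -> J i) ->
     P (\bigcap_(i in [set` s]) (X i @^-1` A i)) =
     (\prod_(i <- s) P (X i @^-1` A i))%E).

(* The index of the joint family: inl (x,t) for chi_t(x), inr (x,t) for j_t(x). *)
Definition idx_time (i : (int * nat) + (int * nat)) : nat :=
  match i with inl (_, t) => t | inr (_, t) => t end.

Definition joint_family (T : Type) (chi j : nat -> int -> T -> nat)
  (i : (int * nat) + (int * nat)) : T -> nat :=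
  match i with inl (x, t) => chi t x | inr (x, t) => j t x end.

Definition separating (T : Type) (N : nat) (chi j : nat -> int -> T -> nat)
  (w : T) (k : int) : Prop :=
  forall t : nat, (1 <= t <= N)%N ->
    chi t (k + t%:Z) w = 0%N /\
    (forall m : int, m < k + t%:Z -> (j t m w)%:Z + m <= k + t%:Z).

(* Main.v *)
Require Import Defs.
From HB Require Import structures.
From mathcomp Require Import all_boot all_order all_algebra.
From mathcomp Require Import all_classical all_reals all_analysis.
From mathcomp Require Import zify ring lra.
Import Order.TTheory GRing.Theory Num.Theory.
Local Open Scope classical_set_scope.
Local Open Scope ring_scope.
Lemma exists_pow_le (R : realType) (q e : R) : 0 <= q -> q < 1 -> 0 < e ->
  exists n : nat, q ^+ n <= e.
Proof.
move=> q0 q1 e0.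
have : `|q| < 1 by rewrite ger0_norm.
move/cvg_expr/cvgrPdist_lt/(_ e e0) => [M _ HM].
exists M; have := HM M (leqnn M); rewrite /= sub0r normrN ger0_norm ?exprn_ge0 //.
exact: ltW.
Qed.

Lemma weier (R : realType) (s : seq nat) (a : nat -> R) :
  (forall i, 0 <= a i <= 1) -> 1 - \sum_(i <- s) a i <= \prod_(i <- s) (1 - a i).
Proof.
move=> ha; elim: s => [|i s IH]; first by rewrite !big_nil subr0.
rewrite !big_cons.
have S0 : 0 <= \sum_(k <- s) a k by apply: sumr_ge0 => k _; case/andP: (ha k).
have /andP [a0 a1] := ha i.
nra.
Qed.

Lemma geo_sum (R : realType) (q : R) m n :
  \sum_(l <- iota m n) q ^+ l * (1 - q) = q ^+ m - q ^+ (m + n).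
Proof.
elim: n m => [|n IH] m; first by rewrite big_nil addn0 subrr.
by rewrite /= big_cons IH addSnnS exprS; ring.
Qed.

Lemma prod_lb (R : realType) (q : R) : 0 <= q -> q < 1 ->
  exists C0 : R, 0 < C0 /\ forall W, C0 <= \prod_(l <- iota 1 W) (1 - q ^+ l).
Proof.
move=> q0 q1.
have [L0 hL0] : exists n : nat, q ^+ n <= (1 - q) / 2 by apply: exists_pow_le => //; lra.
have f01 : forall l, 0 <= 1 - q ^+ l.+1 <= 1.
  move=> l; apply/andP; split; first by rewrite subr_ge0 exprn_ile1 // ltW.
  by rewrite lerBlDr lerDl exprn_ge0.
set Q0 := \prod_(l <- iota 1 L0) (1 - q ^+ l).
have Q0pos : 0 < Q0.
  rewrite /Q0 big_seq; apply: prodr_gt0 => l; rewrite mem_iota => /andP [l1 _].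
  by rewrite subr_gt0 exprn_ilt1 // -lt0n.
exists (Q0 / 2); split; first by lra.
move=> W.
have h1 : \prod_(l <- iota 1 (L0 + W)) (1 - q ^+ l) <= \prod_(l <- iota 1 W) (1 - q ^+ l).
  rewrite addnC iotaD big_cat /=.
  have A0 : 0 <= \prod_(l <- iota 1 W) (1 - q ^+ l).
    by rewrite big_seq; apply: prodr_ge0 => l; rewrite mem_iota => /andP [l1 _]; case: l l1 => // l _; case/andP: (f01 l).
  have A1 : \prod_(l <- iota (1 + W) L0) (1 - q ^+ l) <= 1.
    by rewrite big_seq; apply: prodr_ile1 => l; rewrite mem_iota => /andP [l1 _]; case: l l1 => // l _; exact: f01.
  nra.
apply: le_trans h1; rewrite iotaD big_cat /= -/Q0.
have hw : forall i : nat, 0 <= q ^+ i <= 1 by move=> i; rewrite exprn_ge0 // exprn_ile1 // ltW.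
have hW := @weier R (iota (1 + L0) W) (fun l => q ^+ l) hw.
have gs := @geo_sum R q (1 + L0) W.
have hs : \sum_(l <- iota (1 + L0) W) q ^+ l * (1 - q) = (\sum_(l <- iota (1 + L0) W) q ^+ l) * (1 - q).
  by rewrite big_distrl.
have hq1 : q ^+ (1 + L0) <= q ^+ L0.
  have e : q ^+ (1 + L0) = q * q ^+ L0 by rewrite add1n exprS.
  have := hw L0; rewrite e; nra.
have hq2 : 0 <= q ^+ (1 + L0 + W) by rewrite exprn_ge0.
have S0 : 0 <= \sum_(l <- iota (1 + L0) W) q ^+ l by apply: sumr_ge0 => l _; rewrite exprn_ge0.
have hS : \sum_(l <- iota (1 + L0) W) q ^+ l <= 1 / 2.
  have : (\sum_(l <- iota (1 + L0) W) q ^+ l) * (1 - q) <= (1 - q) / 2 by lra.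
  move=> h; have hq : 0 < 1 - q by lra.
  nra.
nra.
Qed.

Definition kpos (n : int) (sgn : bool) (W i : nat) : int :=
  if sgn then n + (i * W.+1)%:Z else n - (i * W.+1)%:Z.

Lemma kpos_sp n sgn W i i' : i != i' ->
  (kpos n sgn W i + W%:Z < kpos n sgn W i') \/ (kpos n sgn W i' + W%:Z < kpos n sgn W i).
Proof.
have key : forall a b : nat, (a < b)%N -> (a * W.+1 + W < b * W.+1)%N.
  move=> a b ab; apply: leq_trans (leq_mul ab (leqnn W.+1)); rewrite mulSn; lia.
rewrite /kpos; case: ltngtP => // hii _.
  by have := key _ _ hii; case: sgn => h; [left|right]; lia.
by have := key _ _ hii; case: sgn => h; [right|left]; lia.
Qed.

Lemma kpos_side n sgn W i : if sgn then n <= kpos n sgn W i else kpos n sgn W i <= n.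
Proof. by rewrite /kpos; case: sgn; lia. Qed.
Section S.
Context (d : measure_display) (T : measurableType d) (R : realType)
  (P : probability T R) (b1 b2 : R) (N : nat) (chi j : nat -> int -> T -> nat).
Hypotheses (hb1 : 0 < b1) (hb12 : b1 < b2) (hb2 : b2 < 1) (hN : (1 <= N)%N).
Let I := ((int * nat) + (int * nat))%type.
Let J : set I := [set i | (1 <= idx_time i <= N)%N].
Let X := joint_family chi j.
Hypothesis Hind : mutually_independent P J X.
Hypothesis Hchi : forall (x : int) (t : nat), (1 <= t <= N)%N ->
     P [set w | chi t x w = 1%N] = b1%:E /\ P [set w | chi t x w = 0%N] = (1 - b1)%:E.
Hypothesis Hj : forall (x : int) (t r : nat), (1 <= t <= N)%N -> (1 <= r)%N ->
     P [set w | j t x w = r] = ((1 - b2) * b2 ^+ r.-1)%:E.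

Let pr (A : set T) : R := fine (P A).

Lemma prE A : measurable A -> P A = (pr A)%:E.
Proof.
move=> mA; rewrite /pr fineK // ge0_fin_numE ?measure_ge0 //.
by rewrite (le_lt_trans (probability_le1 P mA)) // ltry.
Qed.

Arguments prE {A}.

Lemma pr_ge0 A : 0 <= pr A.
Proof. by rewrite /pr fine_ge0 // measure_ge0. Qed.

Lemma pr_le1 A : measurable A -> pr A <= 1.
Proof. by move=> mA; rewrite -lee_fin -prE // probability_le1. Qed.

Lemma Xmeas i (A : set nat) : J i -> measurable (X i @^-1` A).
Proof. by move=> Ji; apply: (Hind.1 i Ji). Qed.

Definition Rect (s : seq I) (A : I -> set nat) : set T :=
  foldr (fun i S => X i @^-1` A i `&` S) setT s.

Lemma RectP s A w : Rect s A w <-> (forall i, i \in s -> A i (X i w)).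
Proof.
elim: s => [|i s IH] /=; first by split.
split.
  move=> [h1 /IH h2] k; rewrite in_cons => /orP [/eqP -> //|]; exact: h2.
move=> h; split; first by apply: h; rewrite mem_head.
by apply/IH => k ks; apply: h; rewrite in_cons ks orbT.
Qed.

Lemma RectE s A : Rect s A = \bigcap_(i in [set` s]) X i @^-1` A i.
Proof.
apply/seteqP; split => w.
  by move/RectP => h i /= si; exact: h.
by move=> h; apply/RectP => i si; exact: h.
Qed.

Lemma Rect_meas s A : (forall i, i \in s -> J i) -> measurable (Rect s A).
Proof.
elim: s => [|i s IH] /= hs; first exact: measurableT.
apply: measurableI; first by apply: Xmeas; apply: hs; rewrite mem_head.
by apply: IH => k ks; apply: hs; rewrite in_cons ks orbT.
Qed.

Lemma Rect_pr s A : uniq s -> (forall i, i \in s -> J i) ->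
  pr (Rect s A) = \prod_(i <- s) pr (X i @^-1` A i).
Proof.
move=> us hs; apply/eqP; rewrite -eqe -prE; last exact: Rect_meas.
rewrite RectE; apply/eqP.
etransitivity; first exact: (Hind.2 s A us hs).
rewrite -prodEFin; apply: eq_big_seq => i si.
by rewrite -prE //; apply: Xmeas; apply: hs.
Qed.

Lemma prDI A B : measurable A -> measurable B ->
  pr A = pr (A `\` B) + pr (A `&` B).
Proof.
move=> mA mB; have mI := measurableI _ _ mA mB; have mD := measurableD mA mB.
by apply/eqP; rewrite -eqe EFinD -!prE // (measureDI P mA mB).
Qed.

Lemma Rect_cat s1 s2 A1 A2 : (forall i, i \in s2 -> i \notin s1) ->
  Rect (s1 ++ s2) (fun i => if i \in s1 then A1 i else A2 i) =
  Rect s1 A1 `&` Rect s2 A2.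
Proof.
move=> dis; apply/seteqP; split => w.
  move/RectP => h; split; apply/RectP => i hi.
    by have := h i; rewrite mem_cat hi /= => /(_ isT).
  by have := h i; rewrite mem_cat hi orbT (negbTE (dis i hi)) => /(_ isT).
move=> [/RectP h1 /RectP h2]; apply/RectP => i; rewrite mem_cat.
by case: ifP => [hi _|_ /= hi]; [exact: h1|exact: h2].
Qed.

Lemma pr_Rect_cat s1 s2 A1 A2 : uniq (s1 ++ s2) ->
  (forall i, i \in s1 ++ s2 -> J i) ->
  pr (Rect s1 A1 `&` Rect s2 A2) = pr (Rect s1 A1) * pr (Rect s2 A2).
Proof.
move=> u hJ; have := u; rewrite cat_uniq => /and3P [u1 dis u2].
have dis' : forall i, i \in s2 -> i \notin s1.
  by move=> i hi; apply/negP => h1; move/hasP: dis; apply; exists i.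
have hJ1 : forall i, i \in s1 -> J i by move=> i hi; apply: hJ; rewrite mem_cat hi.
have hJ2 : forall i, i \in s2 -> J i by move=> i hi; apply: hJ; rewrite mem_cat hi orbT.
rewrite -Rect_cat // !Rect_pr // big_cat /=; congr (_ * _).
  by apply: eq_big_seq => i hi; rewrite hi.
by apply: eq_big_seq => i hi; rewrite (negbTE (dis' i hi)).
Qed.

Definition CoRects (L : seq (seq I * (I -> set nat))) : set T :=
  foldr (fun r S => ~` Rect r.1 r.2 `&` S) setT L.

Lemma CoRects_meas L : (forall i, i \in flatten (map fst L) -> J i) ->
  measurable (CoRects L).
Proof.
elim: L => [|r L IH] /= hJ; first exact: measurableT.
apply: measurableI.
  apply: measurableC; apply: Rect_meas => i hi; apply: hJ; rewrite mem_cat hi //.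
by apply: IH => i hi; apply: hJ; rewrite mem_cat hi orbT.
Qed.

Lemma compl_prod L : forall s0 A0, uniq (s0 ++ flatten (map fst L)) ->
  (forall i, i \in s0 ++ flatten (map fst L) -> J i) ->
  pr (Rect s0 A0 `&` CoRects L) =
  pr (Rect s0 A0) * \prod_(r <- L) (1 - pr (Rect r.1 r.2)).
Proof.
elim: L => [|r L IH] s0 A0 u hJ /=.
  by rewrite setIT big_nil mulr1.
rewrite big_cons.
set F := flatten (map fst L) in u hJ IH *.
have hJ0 : forall i, i \in s0 -> J i by move=> i hi; apply: hJ; rewrite mem_cat hi.
have hJ1 : forall i, i \in r.1 -> J i.
  by move=> i hi; apply: hJ; rewrite !mem_cat hi orbT.
have hJF : forall i, i \in F -> J i.
  by move=> i hi; apply: hJ; rewrite !mem_cat hi !orbT.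
have hJF' : forall i, i \in s0 ++ F -> J i.
  by move=> i; rewrite mem_cat => /orP [] ?; [apply: hJ0|apply: hJF].
have uF : uniq (s0 ++ F).
  by move: u; rewrite uniq_catCA cat_uniq => /and3P [_ _].
have u01 : uniq (s0 ++ r.1).
  by move: u; rewrite catA cat_uniq => /and3P [].
have dis : forall i, i \in r.1 -> i \notin s0.
  move=> i hi; apply/negP => h0; move: u01; rewrite cat_uniq => /and3P [_ /hasP + _].
  by apply; exists i.
have mR0 := Rect_meas s0 A0 hJ0.
have mR1 := Rect_meas r.1 r.2 hJ1.
have mC := CoRects_meas L hJF.
have E1 : Rect s0 A0 `&` (~` Rect r.1 r.2 `&` CoRects L) =
   (Rect s0 A0 `&` CoRects L) `\` Rect r.1 r.2.
  by apply/seteqP; split => w /=; tauto.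
have E2 : (Rect s0 A0 `&` CoRects L) `&` Rect r.1 r.2 =
   Rect (s0 ++ r.1) (fun i => if i \in s0 then A0 i else r.2 i) `&` CoRects L.
  by rewrite Rect_cat // setIAC.
have := @prDI _ _ (measurableI _ _ mR0 mC) mR1.
rewrite -E1 setIAC => h.
have u' : uniq ((s0 ++ r.1) ++ F) by rewrite -catA.
have hJ' : forall i, i \in (s0 ++ r.1) ++ F -> J i by move=> i; rewrite -catA; apply: hJ.
have := IH _ (fun i : I => if i \in s0 then A0 i else r.2 i) u' hJ'.
rewrite Rect_cat // pr_Rect_cat //; last first.
  by move=> i; rewrite mem_cat => /orP [] ?; [apply: hJ0|apply: hJ1].
have := IH s0 A0 uF hJF'.
move=> h1 h2; rewrite h1 h2 in h; lra.
Qed.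

Lemma jmeas t x (A : set nat) : (1 <= t <= N)%N -> measurable [set w | A (j t x w)].
Proof. by move=> ht; exact: (@Xmeas (inr (x, t)) A ht). Qed.

Lemma chimeas t x (A : set nat) : (1 <= t <= N)%N -> measurable [set w | A (chi t x w)].
Proof. by move=> ht; exact: (@Xmeas (inl (x, t)) A ht). Qed.

Lemma pr_j_le t x l : (1 <= t <= N)%N ->
  1 - b2 ^+ l <= pr [set w | (j t x w <= l)%N].
Proof.
move=> ht; elim: l => [|l IH]; first by rewrite expr0 subrr pr_ge0.
have E : [set w | (j t x w <= l.+1)%N] =
  [set w | (j t x w <= l)%N] `|` [set w | j t x w = l.+1].
  apply/seteqP; split => w /=; first by rewrite leq_eqVlt ltnS => /orP [/eqP|] ?; [right|left].
  by case => [h|->]; [exact: leqW|].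
have m1 := @jmeas t x [set r | (r <= l)%N] ht.
have m2 := @jmeas t x [set r | r = l.+1] ht.
have : P [set w | (j t x w <= l.+1)%N] =
   P [set w | (j t x w <= l)%N] + P [set w | j t x w = l.+1].
  rewrite E measureU //; apply/seteqP; split => w //= [h1 h2].
  by move: h1; rewrite h2 ltnn.
rewrite (prE (@jmeas t x [set r | (r <= l.+1)%N] ht)) (prE m1) (Hj x t l.+1 ht (ltn0Sn l)) /=.
rewrite -EFinD => /eqP; rewrite eqe => /eqP ->.
have hb2' : 0 <= b2 by apply: ltW; apply: lt_trans hb12.
move: IH; rewrite exprS; nra.
Qed.

Lemma pr_j_gt t x l : (1 <= t <= N)%N ->
  pr [set w | (l < j t x w)%N] <= b2 ^+ l.
Proof.
move=> ht.
have E : [set w | (l < j t x w)%N] = ~` [set w | (j t x w <= l)%N].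
  by apply/seteqP; split => w /=; rewrite ltnNge => /negP.
have m1 := @jmeas t x [set r | (r <= l)%N] ht.
have := pr_j_le t x l ht.
have : P [set w | (l < j t x w)%N] = (1 - P [set w | (j t x w <= l)%N])%E.
  by rewrite E probability_setC.
rewrite (prE (@jmeas t x [set r | (l < r)%N] ht)) (prE m1) -EFinB => /eqP; rewrite eqe => /eqP ->.
lra.
Qed.

Definition hk (k : int) (p : nat * nat) : I :=
  if p.2 == 0%N then inl (k + p.1%:Z, p.1) else inr (k + p.1%:Z - p.2%:Z, p.1).
Definition pairs W := [seq (t, l) | t <- iota 1 N, l <- iota 0 W.+1].
Definition sk k W := map (hk k) (pairs W).
Definition Ak (k : int) (i : I) : set nat :=
  match i with inl _ => [set 0%N] | inr (m, t) => [set r | r%:Z + m <= k + t%:Z] end.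
Definition Ev k W := Rect (sk k W) (Ak k).
Definition Ut (k : int) (W t : nat) : set T :=
  \bigcup_n [set w | (W.+1 + n < j t (k + t%:Z - (W.+1 + n)%:Z) w)%N].
Definition Far k W := foldr (fun t S => Ut k W t `|` S) set0 (iota 1 N).

Lemma foldrUP (s : seq nat) (F : nat -> set T) w :
  foldr (fun t S => F t `|` S) set0 s w <-> exists t, t \in s /\ F t w.
Proof.
elim: s => [|a s IH] /=; first by split => // [[t []]].
split.
  case => [h|/IH [t [ts h]]]; first by exists a; rewrite mem_head.
  by exists t; rewrite in_cons ts orbT.
move=> [t []]; rewrite in_cons => /orP [/eqP -> h|ts h]; first by left.
by right; apply/IH; exists t.
Qed.

Lemma FarP k W w : Far k W w <-> exists t, (1 <= t <= N)%N /\ Ut k W t w.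
Proof.
rewrite /Far foldrUP; split => [[t [ht h]]|[t [ht h]]]; exists t;
  by move: ht; rewrite mem_iota add1n ltnS.
Qed.

Lemma sep_of k W w : Ev k W w -> ~ Far k W w -> separating N chi j w k.
Proof.
move=> /RectP hE hF t ht.
have memE : forall p, p \in pairs W -> Ak k (hk k p) (X (hk k p) w).
  by move=> p hp; apply: hE; apply: map_f.
have tin : t \in iota 1 N by rewrite mem_iota add1n ltnS.
split.
  have := memE (t, 0%N) (allpairs_f pair tin (_ : 0%N \in iota 0 W.+1)).
  by rewrite mem_iota; move/(_ isT).
move=> m hm.
case: (lerP (k + t%:Z - W%:Z) m) => hmW.
  have [l hl] : exists l : nat, k + t%:Z - m = l%:Z.
    by exists (absz (k + t%:Z - m)%R); lia.
  have lin : l \in iota 0 W.+1 by rewrite mem_iota add0n ltnS; lia.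
  have := memE (t, l) (allpairs_f pair tin lin).
  rewrite /hk /=; case: eqP => [l0|_]; first by lia.
  by rewrite /= (_ : k + t%:Z - l%:Z = m) //; lia.
have [n hn] : exists n : nat, k + t%:Z - m = (W.+1 + n)%:Z.
  by exists (absz (k + t%:Z - m)%R - W.+1)%N; lia.
have nU : ~ Ut k W t w by move=> hU; apply: hF; apply/FarP; exists t.
have : ~ (W.+1 + n < j t (k + t%:Z - (W.+1 + n)%:Z) w)%N.
  by move=> h; apply: nU; exists n.
rewrite (_ : k + t%:Z - (W.+1 + n)%:Z = m); last by lia.
lia.
Qed.

Lemma prod_const_seq (A : Type) (s : seq A) (x : R) : \prod_(t <- s) x = x ^+ size s.
Proof. by elim: s => [|a s IH]; rewrite ?big_nil ?expr0 // big_cons IH exprS. Qed.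

Lemma sk_J k W : forall i, i \in sk k W -> J i.
Proof.
move=> i /mapP [[t l] /allpairsP [[t' l'] /= [ht _ [-> ->]]] ->].
by move: ht; rewrite mem_iota /J /hk /=; case: eqP => _ /=; rewrite add1n ltnS.
Qed.

Lemma hk_inj k : injective (hk k).
Proof.
move=> [t l] [t' l']; rewrite /hk /=.
case: eqP => [->|hl]; case: eqP => [->|hl'] //=.
- by case=> _ ->.
- by case=> h ht; subst t; congr pair; lia.
Qed.

Lemma pairs_uniq W : uniq (pairs W).
Proof. by apply: allpairs_uniq; rewrite ?iota_uniq // => -[a b] [c e] _ _. Qed.

Lemma sk_uniq k W : uniq (sk k W).
Proof. by rewrite map_inj_uniq ?pairs_uniq //; exact: hk_inj. Qed.

Lemma Ev_meas k W : measurable (Ev k W).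
Proof. by apply: Rect_meas; exact: sk_J. Qed.

Lemma pr_j_set t k l : (1 <= t <= N)%N ->
  1 - b2 ^+ l <= pr (X (inr (k + t%:Z - l%:Z, t)) @^-1`
                      Ak k (inr (k + t%:Z - l%:Z, t))).
Proof.
move=> ht; have -> : X (inr (k + t%:Z - l%:Z, t)) @^-1` Ak k (inr (k + t%:Z - l%:Z, t))
   = [set w | (j t (k + t%:Z - l%:Z) w <= l)%N].
  apply/seteqP; split => w; rewrite /X /Ak /=; move: (j t _ w) => n; lia.
exact: pr_j_le.
Qed.

Lemma Ev_lb C0 : 0 < C0 -> (forall W, C0 <= \prod_(l <- iota 1 W) (1 - b2 ^+ l)) ->
  forall k W, ((1 - b1) * C0) ^+ N <= pr (Ev k W).
Proof.
move=> C0pos hC0 k W.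
have b1le : 0 <= 1 - b1 by have := lt_trans hb12 hb2; rewrite -subr_gt0 => /ltW.
rewrite /Ev Rect_pr ?sk_uniq //; last exact: sk_J.
rewrite /sk big_map /pairs big_allpairs.
rewrite (_ : ((1 - b1) * C0) ^+ N = \prod_(t <- iota 1 N) ((1 - b1) * C0)); last first.
  by rewrite prod_const_seq size_iota.
rewrite big_seq [X in _ <= X]big_seq.
apply: ler_prod => t; rewrite mem_iota add1n ltnS => ht.
apply/andP; split; first by apply: mulr_ge0 => //; exact: ltW.
rewrite /= big_cons /hk /=.
have -> : pr (X (inl (k + t%:Z, t)) @^-1` Ak k (inl (k + t%:Z, t))) = 1 - b1.
  have := (Hchi (k + t%:Z) t ht).2.
  rewrite (@prE [set w | chi t (k + t%:Z) w = 0%N]); last first.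
    exact: (@chimeas t (k + t%:Z) [set 0%N] ht).
  by move/eqP; rewrite eqe => /eqP.
apply: ler_wpM2l => //.
apply: le_trans (hC0 W) _.
rewrite big_seq [X in _ <= X]big_seq; apply: ler_prod => l.
rewrite mem_iota => /andP [l1 _].
have -> : (l == 0%N) = false by case: l l1.
have b20 : 0 <= b2 by apply: ltW; apply: lt_trans hb12.
apply/andP; split; first by rewrite subr_ge0 exprn_ile1 // ltW.
exact: pr_j_set.
Qed.

Lemma Ut_meas k W t : (1 <= t <= N)%N -> measurable (Ut k W t).
Proof.
move=> ht; apply: bigcupT_measurable => n.
exact: (@jmeas t _ [set r | (W.+1 + n < r)%N] ht).
Qed.

Lemma geo_part (n m : nat) : \sum_(0 <= i < n) b2 ^+ (m + i) <= b2 ^+ m / (1 - b2).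
Proof.
have b20 : 0 <= b2 by apply: ltW; apply: lt_trans hb12.
have hq : 0 < 1 - b2 by rewrite subr_gt0.
have gs := @geo_sum R b2 0 n.
rewrite add0n expr0 in gs.
have E : \sum_(0 <= i < n) b2 ^+ (m + i) = b2 ^+ m * \sum_(l <- iota 0 n) b2 ^+ l.
  by rewrite big_distrr /= /index_iota subn0; apply: eq_bigr => i _; rewrite exprD.
rewrite E ler_pdivlMr // -mulrA ler_piMr ?exprn_ge0 //.
rewrite big_distrl /= gs; have := exprn_ge0 n b20; lra.
Qed.

Lemma Ut_bound k W t : (1 <= t <= N)%N ->
  (P (Ut k W t) <= (b2 ^+ W.+1 / (1 - b2))%:E)%E.
Proof.
move=> ht.
pose F n := [set w | (W.+1 + n < j t (k + t%:Z - (W.+1 + n)%:Z) w)%N].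
have mF : forall n, measurable (F n).
  by move=> n; exact: (@jmeas t _ [set r | (W.+1 + n < r)%N] ht).
have := @measure_sigma_subadditive _ _ _ P (Ut k W t) F mF (Ut_meas k W t ht) (fun x hx => hx).
move=> h; apply: (le_trans h).
apply: le_trans (@lee_nneseries R _ (fun n => (b2 ^+ (W.+1 + n))%:E) xpredT 0%N _ _) _.
- by move=> i _ _; exact: measure_ge0.
- move=> n _ /=; rewrite (prE (mF n)) lee_fin; exact: pr_j_gt.
apply: lime_le.
  by apply: is_cvg_nneseries => n _ _; rewrite lee_fin exprn_ge0 // ltW // (lt_trans hb1).
apply: nearW => n /=; rewrite sumEFin lee_fin; exact: geo_part.
Qed.

Lemma foldrU_meas (s : seq nat) (F : nat -> set T) :
  (forall t, t \in s -> measurable (F t)) ->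
  measurable (foldr (fun t S => F t `|` S) set0 s).
Proof.
elim: s => [|a s IH] h /=; first exact: measurable0.
apply: measurableU; first by apply: h; rewrite mem_head.
by apply: IH => t ts; apply: h; rewrite in_cons ts orbT.
Qed.

Lemma foldrU_le (s : seq nat) (F : nat -> set T) :
  (forall t, t \in s -> measurable (F t)) ->
  (P (foldr (fun t S => F t `|` S) set0 s) <= \sum_(t <- s) P (F t))%E.
Proof.
elim: s => [|a s IH] h /=; first by rewrite measure0 big_nil.
have ha : measurable (F a) by apply: h; rewrite mem_head.
have hs : forall t, t \in s -> measurable (F t).
  by move=> t ts; apply: h; rewrite in_cons ts orbT.
rewrite big_cons; apply: le_trans (measureU2 P ha (@foldrU_meas s F hs)) _.
by apply: leeD => //; exact: IH.
Qed.

Lemma sum_const_seq (A : Type) (s : seq A) (x : R) : \sum_(t <- s) x = x *+ size s.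
Proof. by elim: s => [|a s IH]; rewrite ?big_nil ?mulr0n // big_cons IH mulrS. Qed.

Lemma Far_meas k W : measurable (Far k W).
Proof.
apply: (@foldrU_meas (iota 1 N) (Ut k W)) => t; rewrite mem_iota add1n ltnS => ht; exact: Ut_meas.
Qed.

Lemma Far_bound k W :
  (P (Far k W) <= (N%:R * (b2 ^+ W.+1 / (1 - b2)))%:E)%E.
Proof.
apply: le_trans (@foldrU_le (iota 1 N) (Ut k W) _) _.
  by move=> t; rewrite mem_iota add1n ltnS => ht; exact: Ut_meas.
apply: le_trans (_ : (\sum_(t <- iota 1 N) (b2 ^+ W.+1 / (1 - b2))%:E <= _)%E).
  rewrite big_seq [X in (_ <= X)%E]big_seq; apply: lee_sum => t.
  rewrite mem_iota add1n ltnS => ht; exact: Ut_bound.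
by rewrite sumEFin sum_const_seq size_iota mulr_natl.
Qed.

Definition Lst (kp : nat -> int) K W :=
  [seq (sk (kp i) W, Ak (kp i)) | i <- iota 0 K.+1].
Definition FarAll (kp : nat -> int) K W :=
  foldr (fun i S => Far (kp i) W `|` S) set0 (iota 0 K.+1).

Lemma CoRects_of (kp : nat -> int) W w (s : seq nat) :
  (forall i, i \in s -> ~ Ev (kp i) W w) ->
  CoRects [seq (sk (kp i) W, Ak (kp i)) | i <- s] w.
Proof.
elim: s => [|a s IH] h //=; split; first by apply: h; rewrite mem_head.
by apply: IH => i hi; apply: h; rewrite in_cons hi orbT.
Qed.

Lemma Lst_uniq (kp : nat -> int) K W :
  (forall i i', i != i' -> (kp i + W%:Z < kp i') \/ (kp i' + W%:Z < kp i)) ->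
  uniq ([::] ++ flatten (map fst (Lst kp K W))).
Proof.
move=> hsp.
have -> : [::] ++ flatten (map fst (Lst kp K W)) =
    [seq hk (kp i) p | i <- iota 0 K.+1, p <- pairs W].
  by rewrite /Lst -map_comp.
apply: allpairs_uniq; rewrite ?iota_uniq ?pairs_uniq //.
move=> [i p] [i' p'] hx hy.
case/allpairsP: hx => [[a b] /= [ha hb [e1 e2]]].
case/allpairsP: hy => [[a' b'] /= [ha' hb' [e1' e2']]].
subst i p i' p'.
case/allpairsP: hb => [[t l] /= [ht hl ->]].
case/allpairsP: hb' => [[t' l'] /= [ht' hl' ->]].
have lW : forall x, x \in 0%N :: iota 1 W -> (x <= W)%N.
  by move=> x; rewrite in_cons mem_iota => /orP [/eqP ->|/andP [_]] //; rewrite add1n ltnS.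
move: (lW l hl) (lW l' hl') => {hl hl'} hl hl'.
case: (eqVneq a a') => [<- /hk_inj -> //|ne].
have := hsp a a' ne; rewrite /hk /=.
case: eqP => [l0|ln0]; case: eqP => [l0'|ln0'] //= hh; case=> h1 h2; subst t'; lia.
Qed.

Lemma Lst_J (kp : nat -> int) K W :
  forall i, i \in [::] ++ flatten (map fst (Lst kp K W)) -> J i.
Proof.
move=> i; rewrite cat0s /Lst -map_comp => hi; case/flatten_mapP: hi => a _; exact: sk_J.
Qed.

Lemma main_bound C0 (kp : nat -> int) K W :
  0 < C0 -> (forall W, C0 <= \prod_(l <- iota 1 W) (1 - b2 ^+ l)) ->
  (forall i i', i != i' -> (kp i + W%:Z < kp i') \/ (kp i' + W%:Z < kp i)) ->
  exists A, [/\ measurable A,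
    [set w | forall i, (i <= K)%N -> ~ separating N chi j w (kp i)] `<=` A &
    (P A <= ((1 - ((1 - b1) * C0) ^+ N) ^+ K.+1 +
             K.+1%:R * (N%:R * (b2 ^+ W.+1 / (1 - b2))))%:E)%E].
Proof.
move=> C0pos hC0 hsp.
set cc := ((1 - b1) * C0) ^+ N.
have mC : measurable (CoRects (Lst kp K W)).
  apply: CoRects_meas => i hi; apply: Lst_J; exact: hi.
have mF : measurable (FarAll kp K W).
  by apply: (@foldrU_meas (iota 0 K.+1) (fun i => Far (kp i) W)) => i _; exact: Far_meas.
exists (CoRects (Lst kp K W) `|` FarAll kp K W); split.
- exact: measurableU.
- move=> w /= hw; case: (pselect (FarAll kp K W w)) => hf; [right => //|left].
  apply: (@CoRects_of kp W w (iota 0 K.+1)) => i; rewrite mem_iota add0n ltnS => hi hE.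
  apply: (hw i hi); apply: (@sep_of (kp i) W w hE) => hFi; apply: hf.
  rewrite /FarAll; apply/foldrUP; exists i; split => //.
  by rewrite mem_iota add0n ltnS.
apply: le_trans (measureU2 P mC mF) _.
rewrite EFinD; apply: leeD.
  apply: (@le_trans _ _ (pr (CoRects (Lst kp K W)))%:E); first by rewrite -(prE mC); exact: lexx.
  rewrite lee_fin.
  have := @compl_prod (Lst kp K W) [::] (fun _ => setT) (@Lst_uniq kp K W hsp) (@Lst_J kp K W).
  rewrite /= setTI => ->.
  rewrite (_ : pr setT = 1); last first.
    by rewrite /pr probability_setT.
  rewrite mul1r /Lst big_map.
  rewrite (_ : (1 - cc) ^+ K.+1 = \prod_(i <- iota 0 K.+1) (1 - cc)); last first.
    by rewrite prod_const_seq size_iota.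
  apply: ler_prod => i _; apply/andP; split.
    by rewrite subr_ge0 pr_le1 //; exact: Ev_meas.
  by rewrite lerB //; exact: Ev_lb.
apply: le_trans (@foldrU_le (iota 0 K.+1) (fun i => Far (kp i) W) (fun i _ => Far_meas (kp i) W)) _.
apply: le_trans (_ : (\sum_(i <- iota 0 K.+1) (N%:R * (b2 ^+ W.+1 / (1 - b2)))%:E <= _)%E).
  by apply: lee_sum => i _; exact: Far_bound.
by rewrite sumEFin sum_const_seq size_iota !mulr_natl.
Qed.

Lemma eps_negl (S : set T) :
  (forall e : R, 0 < e -> exists A, [/\ measurable A, S `<=` A & (P A <= e%:E)%E]) ->
  P.-negligible S.
Proof.
move=> he.
have h2 : forall n : nat, exists A, [/\ measurable A, S `<=` A & (P A <= ((2^-1) ^+ n)%:E)%E].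
  by move=> n; apply: he; rewrite exprn_gt0 // invr_gt0.
have [F hF] := boolp.choice h2.
exists (\bigcap_n F n); split.
- by apply: bigcapT_measurable => n; have [] := hF n.
- have mB : measurable (\bigcap_n F n) by apply: bigcapT_measurable => n; have [] := hF n.
  rewrite (prE mB); congr EFin.
  have hle : forall n, pr (\bigcap_n F n) <= (2^-1) ^+ n.
    move=> n; have [mFn _ hPn] := hF n.
    rewrite -lee_fin -(prE mB); apply: le_trans hPn.
    by apply: le_measure; rewrite ?inE //; apply: bigcap_inf.
  have p0 := pr_ge0 (\bigcap_n F n).
  apply/eqP; rewrite eq_le p0 andbT; rewrite leNgt; apply/negP => hp.
  have [n hn] : exists n : nat, (2^-1 : R) ^+ n <= pr (\bigcap_n F n) / 2.
    apply: exists_pow_le; [by rewrite invr_ge0 | by rewrite invf_lt1 ?ltr1n | lra].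
  have := hle n; lra.
- by move=> w Sw n _; have [_ hS _] := hF n; exact: hS.
Qed.

Lemma b20 : 0 <= b2.
Proof. by apply: ltW; apply: lt_trans hb12. Qed.

Lemma noSep_gen (n : int) (sgn : bool) :
  P.-negligible [set w | forall k, (if sgn then n <= k else k <= n) ->
                         ~ separating N chi j w k].
Proof.
have [C0 [C0pos hC0]] := @prod_lb R b2 b20 hb2.
set cc := ((1 - b1) * C0) ^+ N.
have b1lt : b1 < 1 by apply: lt_trans hb2.
have ccpos : 0 < cc by rewrite exprn_gt0 // mulr_gt0 // subr_gt0.
have ccle : cc <= 1.
  apply: le_trans (@Ev_lb C0 C0pos hC0 0 0) _; apply: pr_le1; exact: Ev_meas.
apply: eps_negl => e e0.
have [K hK] : exists K : nat, (1 - cc) ^+ K <= e / 2.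
  by apply: exists_pow_le; lra.
have hb2' : 0 < 1 - b2 by rewrite subr_gt0.
have pos : 0 < e / 2 * (1 - b2) / (K.+1%:R * N%:R).
  by rewrite !mulr_gt0 ?invr_gt0 ?mulr_gt0 ?ltr0n //; lra.
have [W hW] := @exists_pow_le R _ _ b20 hb2 pos.
have hsp := kpos_sp n sgn W.
have [A [mA sA hA]] := @main_bound C0 (kpos n sgn W) K W C0pos hC0 hsp.
exists A; split => //.
  move=> w /= hw; apply: sA => i _; apply: hw; exact: kpos_side.
apply: le_trans hA _; rewrite lee_fin.
have q0 : 0 <= 1 - cc by lra.
have h1 : (1 - cc) ^+ K.+1 <= e / 2.
  by apply: le_trans hK; rewrite exprS ler_piMl // ?exprn_ge0 //; lra.
have h2 : b2 ^+ W.+1 <= e / 2 * (1 - b2) / (K.+1%:R * N%:R).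
  by apply: le_trans hW; rewrite exprS ler_piMl ?exprn_ge0 ?b20 //; apply: ltW.
have KN : 0 < K.+1%:R * N%:R :> R by rewrite mulr_gt0 ?ltr0n.
have h3 : K.+1%:R * (N%:R * (b2 ^+ W.+1 / (1 - b2))) <= e / 2.
  have h2' : b2 ^+ W.+1 * (K.+1%:R * N%:R) <= e / 2 * (1 - b2).
    by move: h2; rewrite ler_pdivlMr.
  have -> : K.+1%:R * (N%:R * (b2 ^+ W.+1 / (1 - b2))) =
      (b2 ^+ W.+1 * (K.+1%:R * N%:R)) / (1 - b2) by ring.
  by rewrite ler_pdivrMr.
lra.
Qed.

Lemma good_ae : {ae P, forall w, exists Rs : int -> int,
     (forall i : int, Rs i < Rs (i + 1)) /\ (forall i : int, separating N chi j w (Rs i))}.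
Proof.
pose NS (n : int) (sgn : bool) := [set w | forall k, (if sgn then n <= k else k <= n) ->
                         ~ separating N chi j w k].
pose U (n : nat) := NS (n%:Z) true `|` NS (- n%:Z) false.
have nU : P.-negligible (\bigcup_n U n).
  apply: negligible_bigcup => n; apply: negligibleU; [exact: (noSep_gen (n%:Z) true)|exact: (noSep_gen (- n%:Z) false)].
apply: (negligibleS _ nU) => w /= hw; apply: contrapT => hU; apply: hw.
have up : forall x : int, exists k, x < k /\ separating N chi j w k.
  move=> x; apply: contrapT => hne; apply: hU; exists (absz x).+1 => //.
  by left => k /= hk hs; apply: hne; exists k; split => //; lia.
have down : forall x : int, exists k, k < x /\ separating N chi j w k.
  move=> x; apply: contrapT => hne; apply: hU; exists (absz x).+1 => //.
  by right => k /= hk hs; apply: hne; exists k; split => //; lia.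
have [f hf] := boolp.choice up.
have [g hg] := boolp.choice down.
exists (fun z => match z with Posz m => iter m.+1 f 0 | Negz m => iter m.+1 g 0 end).
split.
  case=> [m|[|m]].
  - have -> : Posz m + 1 = Posz m.+1 by lia.
    by rewrite [X in _ < X]/= ; case: (hf (iter m.+1 f 0)).
  - have -> : Negz 0 + 1 = Posz 0 by rewrite NegzE; lia.
    rewrite /=; case: (hf 0) => h1 _; case: (hg 0) => h2 _; lia.
  - have -> : Negz m.+1 + 1 = Negz m by rewrite !NegzE; lia.
    by rewrite [X in X < _]/=; case: (hg (iter m.+1 g 0)).
by case=> m /=; [case: (hf (iter m f 0))|case: (hg (iter m g 0))].
Qed.

End S.

Theorem lemma2p3 (d : measure_display) (T : measurableType d) (R : realType)
  (P : probability T R) (b1 b2 : R) (N : nat) (chi j : nat -> int -> T -> nat) :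
  0 < b1 -> b1 < b2 -> b2 < 1 -> (1 <= N)%N ->
  mutually_independent P [set i | (1 <= idx_time i <= N)%N] (joint_family chi j) ->
  (forall (x : int) (t : nat), (1 <= t <= N)%N ->
     P [set w | chi t x w = 1%N] = b1%:E /\ P [set w | chi t x w = 0%N] = (1 - b1)%:E) ->
  (forall (x : int) (t r : nat), (1 <= t <= N)%N -> (1 <= r)%N ->
     P [set w | j t x w = r] = ((1 - b2) * b2 ^+ r.-1)%:E) ->
  {ae P, forall w, exists Rs : int -> int,
     (forall i : int, Rs i < Rs (i + 1)) /\ (forall i : int, separating N chi j w (Rs i))}.
Proof.
move=> h1 h2 h3 h4 h5 h6 h7.
exact: (@good_ae d T R P b1 b2 N chi j h1 h2 h3 h4 h5 h6 h7).
Qed.
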